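(* Let $N\ge2$, $t,r\ge1$, $m=t+r<N$, $K\ge N$, and let $\mathbf{z}\in\mathbb{C}^N$ and $\mathbf{S}\in\mathbb{C}^{N\times N}$ Hermitian positive definite. Define the GLRT statistic $$t_{\mathrm{GLRT}}=\frac{1+\mathbf{z}^\dagger\mathbf{S}^{-1/2}\mathbf{P}^\perp_{\mathbf{S}^{-1/2}\mathbf{E}_t}\mathbf{S}^{-1/2}\mathbf{z}}{1+\mathbf{z}^\dagger\mathbf{S}^{-1/2}\mathbf{P}^\perp_{\mathbf{S}^{-1/2}\mathbf{E}_m}\mathbf{S}^{-1/2}\mathbf{z}}.$$ Then $\mathbf{z}^\dagger\mathbf{S}^{-1/2}\mathbf{P}^\perp_{\mathbf{S}^{-1/2}\mathbf{E}_t}\mathbf{S}^{-1/2}\mathbf{z}=\frac{1-p_1p_2}{p_1p_2}$, $\mathbf{z}^\dagger\mathbf{S}^{-1/2}\mathbf{P}^\perp_{\mathbf{S}^{-1/2}\mathbf{E}_m}\mathbf{S}^{-1/2}\mathbf{z}=\frac{1-p_2}{p_2}$, and consequently $t_{\mathrm{GLRT}}=1/p_1$.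
   Context: $\mathbf{E}_t=[\mathbf{I}_t\ \mathbf{0}\ \mathbf{0}]^T\in\mathbb{C}^{N\times t}$, $\mathbf{E}_r=[\mathbf{0}\ \mathbf{I}_r\ \mathbf{0}]^T\in\mathbb{C}^{N\times r}$, $\mathbf{E}_m=[\mathbf{E}_t\ \mathbf{E}_r]$. For a full-column-rank $\mathbf{A}$, $\mathbf{P}_{\mathbf{A}}=\mathbf{A}(\mathbf{A}^\dagger\mathbf{A})^{-1}\mathbf{A}^\dagger$ and $\mathbf{P}^\perp_{\mathbf{A}}=\mathbf{I}_N-\mathbf{P}_{\mathbf{A}}$; $\mathbf{S}^{-1/2}$ is the Hermitian positive definite square root of $\mathbf{S}^{-1}$. Partition $\mathbf{z}=[\mathbf{z}_1^T\ \mathbf{z}_2^T\ \mathbf{z}_3^T]^T$ with sizes $t,r,N-m$ and $\mathbf{S}$ conformably into blocks $\mathbf{S}_{ij}$. $\mathbf{z}_{2.3}=\mathbf{z}_2-\mathbf{S}_{23}\mathbf{S}_{33}^{-1}\mathbf{z}_3$, $\mathbf{S}_{2.3}=\mathbf{S}_{22}-\mathbf{S}_{23}\mathbf{S}_{33}^{-1}\mathbf{S}_{32}$, $m_1=\mathbf{z}_{2.3}^\dagger\mathbf{S}_{2.3}^{-1}\mathbf{z}_{2.3}$, $m_2=\mathbf{z}_3^\dagger\mathbf{S}_{33}^{-1}\mathbf{z}_3$, $p_1=1/\bigl(1+\frac{m_1}{1+m_2}\bigr)$, $p_2=1/(1+m_2)$. *)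

(* Defs.v *)
From HB Require Import structures.
From mathcomp Require Import all_boot all_order all_algebra.
Set Implicit Arguments. Unset Strict Implicit. Unset Printing Implicit Defensive.
Import Order.TTheory GRing.Theory Num.Theory.
Local Open Scope ring_scope.
Local Open Scope sesquilinear_scope.

Section Defs.
Variable C : numClosedFieldType.

Definition hermitian_pd n (A : 'M[C]_n) : Prop :=
  A ^t* = A /\ forall x : 'cV[C]_n, x != 0 -> 0 < (x ^t* *m A *m x) ord0 ord0.

Definition projmx n k (A : 'M[C]_(n, k)) : 'M[C]_n :=
  A *m invmx (A ^t* *m A) *m A ^t*.
Definition projperp n k (A : 'M[C]_(n, k)) : 'M[C]_n := 1%:M - projmx A.

Definition qform n (x : 'cV[C]_n) (M : 'M[C]_n) : C := (x ^t* *m M *m x) ord0 ord0.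

(* selection matrices, with N = t + r + s *)
Definition Et t r s : 'M[C]_(t + r + s, t) := col_mx (col_mx 1%:M 0) 0.
Definition Er t r s : 'M[C]_(t + r + s, r) := col_mx (col_mx 0 1%:M) 0.
Definition Em t r s : 'M[C]_(t + r + s, t + r) := row_mx (Et t r s) (Er t r s).

Definition z2blk t r s (z : 'cV[C]_(t + r + s)) : 'cV[C]_r := dsubmx (usubmx z).
Definition z3blk t r s (z : 'cV[C]_(t + r + s)) : 'cV[C]_s := dsubmx z.
Definition S22 t r s (S : 'M[C]_(t + r + s)) : 'M[C]_r := drsubmx (ulsubmx S).
Definition S23 t r s (S : 'M[C]_(t + r + s)) : 'M[C]_(r, s) := dsubmx (ursubmx S).
Definition S32 t r s (S : 'M[C]_(t + r + s)) : 'M[C]_(s, r) := rsubmx (dlsubmx S).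
Definition S33 t r s (S : 'M[C]_(t + r + s)) : 'M[C]_s := drsubmx S.

End Defs.

(* Main.v *)
Require Import Defs.
From HB Require Import structures.
From mathcomp Require Import all_boot all_order all_algebra.
Import Order.TTheory GRing.Theory Num.Theory.
Local Open Scope ring_scope.
Local Open Scope sesquilinear_scope.
Set Implicit Arguments. Unset Strict Implicit.
From mathcomp Require Import ring.

Section H.
Variable C : numClosedFieldType.

Lemma ctM m n p (A : 'M[C]_(m,n)) (B : 'M[C]_(n,p)) : (A *m B)^t* = B^t* *m A^t*.
Proof. by rewrite trmx_mul map_mxM. Qed.
Lemma ctD m n (A B : 'M[C]_(m,n)) : (A + B)^t* = A^t* + B^t*.
Proof. by rewrite linearD map_mxD. Qed.
Lemma ctB m n (A B : 'M[C]_(m,n)) : (A - B)^t* = A^t* - B^t*.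
Proof. by rewrite linearB map_mxB. Qed.
Lemma ct0 m n : (0 : 'M[C]_(m,n))^t* = 0.
Proof. by rewrite trmx0 map_mx0. Qed.
Lemma ct1 n : (1%:M : 'M[C]_n)^t* = 1%:M.
Proof. by rewrite trmx1 map_mx1. Qed.
Lemma ct_col m1 m2 n (A : 'M[C]_(m1,n)) (B : 'M[C]_(m2,n)) :
  (col_mx A B)^t* = row_mx (A^t*) (B^t*).
Proof. by rewrite tr_col_mx map_row_mx. Qed.
Lemma ct_row m n1 n2 (A : 'M[C]_(m,n1)) (B : 'M[C]_(m,n2)) :
  (row_mx A B)^t* = col_mx (A^t*) (B^t*).
Proof. by rewrite tr_row_mx map_col_mx. Qed.
Lemma ct_block m1 m2 n1 n2 (a : 'M[C]_(m1,n1)) (b : 'M[C]_(m1,n2))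
  (c : 'M[C]_(m2,n1)) (d : 'M[C]_(m2,n2)) :
  (block_mx a b c d)^t* = block_mx (a^t*) (c^t*) (b^t*) (d^t*).
Proof. by rewrite tr_block_mx map_block_mx. Qed.
Lemma ct_inv n (A : 'M[C]_n) : (invmx A)^t* = invmx (A^t*).
Proof. by rewrite trmx_inv map_invmx. Qed.

Lemma inj_unit n (A : 'M[C]_n) :
  (forall x : 'cV[C]_n, A *m x = 0 -> x = 0) -> A \in unitmx.
Proof.
move=> H; rewrite -unitmx_tr unitmxE unitfE; apply/det0P => -[v v0 hv].
have := H v^T; rewrite -(trmxK (A *m v^T)) trmx_mul trmxK hv trmx0.
move=> /(_ erefl) /eqP; by rewrite -trmx0 (inj_eq trmx_inj) (negPf v0).
Qed.

Definition pdm n (B : 'M[C]_n) :=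
  forall x : 'cV[C]_n, x != 0 -> 0 < (x^t* *m B *m x) ord0 ord0.

Lemma pd_unit n (B : 'M[C]_n) : pdm B -> B \in unitmx.
Proof.
move=> H; apply: inj_unit => x Bx; apply/eqP; apply: contraT => x0.
by have := H x x0; rewrite -mulmxA Bx mulmx0 mxE ltxx.
Qed.

Lemma pd_sand n k (P : 'M[C]_n) (F : 'M[C]_(n,k)) :
  pdm P -> F^t* *m F = 1%:M -> pdm (F^t* *m P *m F).
Proof.
move=> H hF x x0.
have Fx0 : F *m x != 0.
  by apply: contra x0 => /eqP Fx; rewrite -[x]mul1mx -hF -mulmxA Fx mulmx0.
by have := H _ Fx0; rewrite ctM !mulmxA.
Qed.

Lemma psd_inv n (B : 'M[C]_n) : B^t* = B -> pdm B ->
  forall u : 'cV[C]_n, 0 <= (u^t* *m invmx B *m u) ord0 ord0.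
Proof.
move=> hB pB u; have uB := pd_unit pB.
have [v ->] : exists v, u = B *m v by exists (invmx B *m u); rewrite mulKVmx.
rewrite ctM hB mulmxK //.
have [->|v0] := eqVneq v 0; first by rewrite !mulmx0 mxE.
by apply: ltW; have := pB v v0; rewrite mulmxA.
Qed.

Lemma W_pd N (S A : 'M[C]_N) : hermitian_pd S -> A^t* = A ->
  A *m A = invmx S -> pdm (invmx S) /\ (invmx S)^t* = invmx S.
Proof.
move=> [hS pS] hA hAA; have uS := pd_unit pS.
have hW : (invmx S)^t* = invmx S by rewrite -hAA ctM hA.
split=> // x x0.
have y0 : invmx S *m x != 0.
  by apply: contra x0 => /eqP y; rewrite -[x](mulKVmx uS) y mulmx0.
have := pS _ y0; rewrite ctM hW -!mulmxA (mulmxA S) mulmxV // mul1mx.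
by rewrite !mulmxA.
Qed.

Lemma proj_lemma N k l (S A : 'M[C]_N) (E : 'M[C]_(N,k)) (F : 'M[C]_(N,l)) :
  S \in unitmx -> A^t* = A -> A *m A = invmx S ->
  E^t* *m invmx S *m E \in unitmx -> F^t* *m S *m F \in unitmx ->
  E^t* *m F = 0 -> F^t* *m E = 0 -> E *m E^t* + F *m F^t* = 1%:M ->
  A *m projperp (A *m E) *m A = F *m invmx (F^t* *m S *m F) *m F^t*.
Proof.
move=> uS hA hAA uE uF hEF hFE hsum.
set W := invmx S; set X := invmx (E^t* *m W *m E); set Y := invmx (F^t* *m S *m F).
have -> : A *m projperp (A *m E) *m A = W - W *m E *m X *m E^t* *m W.
  rewrite /projperp /projmx ctM hA.
  rewrite [E^t* *m A *m (A *m E)]mulmxA -[E^t* *m A *m A]mulmxA hAA -/W -/X.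
  rewrite mulmxBr mulmx1 mulmxBl hAA; congr (_ - _).
  by rewrite !mulmxA hAA -!mulmxA hAA !mulmxA.
set M := W - _.
have ME : M *m E = 0.
  rewrite mulmxBl.
  have -> : W *m E *m X *m E^t* *m W *m E = W *m E *m (X *m (E^t* *m W *m E)).
    by rewrite !mulmxA.
  by rewrite mulVmx // mulmx1 subrr.
have MSF : M *m (S *m F) = F.
  rewrite mulmxBl -!mulmxA /W !mulKmx // hEF !mulmx0.
  by rewrite subr0.
have SF : S *m F = E *m (E^t* *m S *m F) + F *m (F^t* *m S *m F).
  by rewrite -[S *m F]mul1mx -hsum mulmxDl !mulmxA.
have MF : M *m F = F *m Y.
  move: MSF; rewrite SF mulmxDr !mulmxA ME !mul0mx add0r => h.
  have h' : M *m F *m (F^t* *m S *m F) = F by rewrite !mulmxA.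
  by rewrite -[X in _ = X *m Y]h' /Y mulmxK.
rewrite -[M]mulmx1 -hsum mulmxDr !mulmxA ME MF mul0mx add0r.
by [].
Qed.

Lemma schur r s (a : 'M[C]_r) (b : 'M[C]_(r,s)) (c : 'M[C]_(s,r)) (d : 'M[C]_s)
  (z2 : 'cV[C]_r) (z3 : 'cV[C]_s) :
  (block_mx a b c d)^t* = block_mx a b c d -> pdm (block_mx a b c d) ->
  (col_mx z2 z3)^t* *m invmx (block_mx a b c d) *m col_mx z2 z3 =
  (z2 - b *m invmx d *m z3)^t* *m invmx (a - b *m invmx d *m c) *m
     (z2 - b *m invmx d *m z3) + z3^t* *m invmx d *m z3.
Proof.
set B := block_mx a b c d => hB pB.
have [ha hcb hbc hd] := eq_block_mx (etrans (esym (ct_block a b c d)) hB).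
have pd_d : pdm d.
  have := @pd_sand _ _ B (col_mx 0 1%:M) pB.
  rewrite ct_col ct0 ct1 mul_row_col mul0mx mul1mx add0r => /(_ erefl).
  by rewrite mul_row_block !mul0mx !mul1mx !add0r mul_row_col mulmx0 mulmx1 add0r.
have ud := pd_unit pd_d; have uB := pd_unit pB.
set Sc := a - b *m invmx d *m c.
set z23 := z2 - b *m invmx d *m z3.
have uSc : Sc \in unitmx.
  apply: inj_unit => x Scx.
  have : B *m col_mx x (- (invmx d *m (c *m x))) = 0.
    rewrite mul_block_col !mulmxN mulKVmx // subrr !mulmxA.
    by move: Scx; rewrite /Sc mulmxBl => ->; rewrite col_mx0.
  move=> /(congr1 (mulmx (invmx B))); rewrite mulKmx // mulmx0 => /eqP.
  by rewrite col_mx_eq0 => /andP [/eqP].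
have e1 : Sc *m (invmx Sc *m z23) = z23 by rewrite mulKVmx.
have hY : invmx B *m col_mx z2 z3 =
   col_mx (invmx Sc *m z23) (invmx d *m (z3 - c *m (invmx Sc *m z23))).
  move: (invmx Sc *m z23) e1 => y2 e1.
  apply: (canLR (mulKmx uB)); apply/esym.
  rewrite mul_block_col; congr col_mx; last first.
    by rewrite mulKVmx // addrC subrK.
  move: e1; rewrite /Sc mulmxBl => /eqP; rewrite subr_eq => /eqP ->.
  rewrite !mulmxBr !mulmxA /z23.
  by rewrite addrACA subrK subrr addr0.
rewrite -mulmxA hY -[z23^t* *m _ *m _]mulmxA.
move: (invmx Sc *m z23) => y2.
rewrite ct_col mul_row_col /z23 ctB !ctM ct_inv hd hbc !mulmxBr !mulmxBl !mulmxA.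
by rewrite addrA addrAC.
Qed.

Ltac bsimp := rewrite ?(ct_col, ct_row, ct0, ct1, mul_col_row, mul_row_col, mul_col_mx,
  mul_mx_row, mul_row_block, mul_block_col, mul0mx, mulmx0, mul1mx, mulmx1,
  add0r, addr0, row_mx0, col_mx0, block_mx0, mulmxDl, mulmxDr, add_row_mx, add_col_mx).

Section Blocks.
Variables (t r s : nat).
Definition Ft : 'M[C]_(t+r+s, r+s) := col_mx (col_mx 0 (row_mx 1%:M 0)) (row_mx 0 1%:M).
Definition Fm : 'M[C]_(t+r+s, s) := col_mx 0 1%:M.

Lemma Em_eq : Em C t r s = col_mx 1%:M 0.
Proof.
rewrite /Em /Et /Er -block_mxEh block_mxEv row_mx0 -block_mxEh.
by rewrite -scalar_mx_block.
Qed.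

Lemma Et_Ft : (Et C t r s)^t* *m Ft = 0.
Proof. by rewrite /Et /Ft; bsimp. Qed.
Lemma Et_Et : (Et C t r s)^t* *m Et C t r s = 1%:M.
Proof. by rewrite /Et; bsimp. Qed.
Lemma Ft_Ft : Ft^t* *m Ft = 1%:M.
Proof. rewrite /Ft; bsimp.
by rewrite -block_mxEh -scalar_mx_block. Qed.
Lemma Et_sum : Et C t r s *m (Et C t r s)^t* + Ft *m Ft^t* = 1%:M.
Proof. rewrite /Et /Ft; bsimp. rewrite [RHS]scalar_mx_block /block_mx; congr col_mx.
by rewrite -block_mxEv block_mxEh col_mx0 -block_mxEv -scalar_mx_block. Qed.
Lemma Em_Fm : (Em C t r s)^t* *m Fm = 0.
Proof. by rewrite Em_eq /Fm; bsimp. Qed.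
Lemma Em_Em : (Em C t r s)^t* *m Em C t r s = 1%:M.
Proof. by rewrite Em_eq; bsimp. Qed.
Lemma Fm_Fm : Fm^t* *m Fm = 1%:M.
Proof. by rewrite /Fm; bsimp. Qed.
Lemma Em_sum : Em C t r s *m (Em C t r s)^t* + Fm *m Fm^t* = 1%:M.
Proof. by rewrite Em_eq /Fm; bsimp; rewrite -block_mxEv -scalar_mx_block. Qed.
Lemma Fm_z (z : 'cV[C]_(t+r+s)) : Fm^t* *m z = z3blk z.
Proof. by rewrite -{1}[z]vsubmxK /Fm; bsimp. Qed.
Lemma Fm_S (S : 'M[C]_(t+r+s)) : Fm^t* *m S *m Fm = S33 S.
Proof. by rewrite -{1}[S]submxK /Fm; bsimp. Qed.
Lemma Ft_z (z : 'cV[C]_(t+r+s)) : Ft^t* *m z = col_mx (z2blk z) (z3blk z).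
Proof. by rewrite -{1}[z]vsubmxK -{1}[usubmx z]vsubmxK /Ft; bsimp. Qed.
Lemma Ft_S (S : 'M[C]_(t+r+s)) : Ft^t* *m S *m Ft = block_mx (S22 S) (S23 S) (S32 S) (S33 S).
Proof. rewrite -{1}[S]submxK -[ulsubmx S]submxK -[ursubmx S]vsubmxK -[dlsubmx S]hsubmxK /Ft; bsimp.
by rewrite -block_mxEh. Qed.
End Blocks.
Lemma flipE N k l (E : 'M[C]_(N,k)) (F : 'M[C]_(N,l)) :
  E^t* *m F = 0 -> F^t* *m E = 0.
Proof. by move=> h; rewrite -[F^t* *m E]trmxCK ctM trmxCK h ct0. Qed.
Lemma herm_sand N l (S : 'M[C]_N) (F : 'M[C]_(N,l)) :
  S^t* = S -> (F^t* *m S *m F)^t* = F^t* *m S *m F.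
Proof. by move=> h; rewrite !ctM trmxCK h mulmxA. Qed.
Lemma qform_sand N l (z : 'cV[C]_N) (F : 'M[C]_(N,l)) (Y : 'M[C]_l) :
  qform z (F *m Y *m F^t*) = qform (F^t* *m z) Y.
Proof. by rewrite /qform ctM trmxCK !mulmxA. Qed.
End H.

Theorem mainTheorem6 (C : numClosedFieldType) (t r s K : nat)
  (ht : (0 < t)%N) (hr : (0 < r)%N) (hs : (0 < s)%N) (hK : (t + r + s <= K)%N)
  (z : 'cV[C]_(t + r + s)) (S Sih : 'M[C]_(t + r + s)) :
  hermitian_pd S ->
  (* Sih = S^{-1/2}: the Hermitian positive definite square root of S^{-1} *)
  hermitian_pd Sih -> Sih *m Sih = invmx S ->
  let z2 := z2blk z in
  let z3 := z3blk z in
  let z23 := z2 - S23 S *m invmx (S33 S) *m z3 in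
  let S2_3 := S22 S - S23 S *m invmx (S33 S) *m S32 S in
  let m1 := qform z23 (invmx S2_3) in
  let m2 := qform z3 (invmx (S33 S)) in
  let p1 := 1 / (1 + m1 / (1 + m2)) in
  let p2 := 1 / (1 + m2) in
  let qt := qform z (Sih *m projperp (Sih *m Et C t r s) *m Sih) in
  let qm := qform z (Sih *m projperp (Sih *m Em C t r s) *m Sih) in
  let tGLRT := (1 + qt) / (1 + qm) in
  qt = (1 - p1 * p2) / (p1 * p2) /\ qm = (1 - p2) / p2 /\ tGLRT = 1 / p1.
Proof.
move=> hS hA hAA z2 z3 z23 S2_3 m1 m2 p1 p2 qt qm tG.
have [hSh pS] := hS; have [hAh _] := hA.
have uS := pd_unit pS.
have [pW hW] := W_pd hS hAh hAA.
have hqm : qm = m2.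
  rewrite /qm (proj_lemma (F:=@Fm C t r s) uS hAh hAA _ _ (@Em_Fm C t r s)
     (flipE (@Em_Fm C t r s)) (@Em_sum C t r s)).
  - by rewrite qform_sand Fm_z Fm_S.
  - exact: pd_unit (pd_sand pW (@Em_Em C t r s)).
  - exact: pd_unit (pd_sand pS (@Fm_Fm C t r s)).
have hqt0 : qt = qform ((@Ft C t r s)^t* *m z)
                   (invmx ((@Ft C t r s)^t* *m S *m (@Ft C t r s))).
  rewrite /qt (proj_lemma (F:=@Ft C t r s) uS hAh hAA _ _ (@Et_Ft C t r s)
     (flipE (@Et_Ft C t r s)) (@Et_sum C t r s)).
  - by rewrite qform_sand.
  - exact: pd_unit (pd_sand pW (@Et_Et C t r s)).
  - exact: pd_unit (pd_sand pS (@Ft_Ft C t r s)).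

have hFS := @Ft_S C t r s S.
have hB1 : (block_mx (S22 S) (S23 S) (S32 S) (S33 S))^t* = block_mx (S22 S) (S23 S) (S32 S) (S33 S).
  by rewrite -hFS herm_sand.
have hB2 : pdm (block_mx (S22 S) (S23 S) (S32 S) (S33 S)).
  by rewrite -hFS; apply: pd_sand pS (@Ft_Ft C t r s).
have hqt : qt = m1 + m2.
  by rewrite hqt0 Ft_z hFS /qform (schur _ _ hB1 hB2) mxE.
have m2ge : 0 <= m2.
  rewrite /m2 /qform -(@Fm_S C t r s); apply: psd_inv.
    exact: herm_sand.
  exact: pd_sand pS (@Fm_Fm C t r s).
have qtge : 0 <= m1 + m2.
  rewrite -hqt hqt0 /qform; apply: psd_inv.
    exact: herm_sand.
  exact: pd_sand pS (@Ft_Ft C t r s).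
have a0 : 1 + m2 != 0 by rewrite gt_eqF // ltr_wpDr.
have b0 : 1 + (m1 + m2) != 0 by rewrite gt_eqF // ltr_wpDr.
have c0 : 1 + m1 / (1 + m2) != 0.
  have -> : 1 + m1 / (1 + m2) = (1 + (m1 + m2)) / (1 + m2) by field.
  by rewrite mulf_neq0 // invr_eq0.
rewrite /tG hqt hqm /p1 /p2.
split; [|split]; field; rewrite ?a0 ?b0 ?c0 //.
all: by rewrite -addrA (addrC m2).

Qed.
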